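(* Let $X\in\mathbb{R}^{n\times d}$ with rows $x_1,\dots,x_n$, weighted by $w\in\mathbb{R}^n_{>0}$, be $\mu$-complex, let $\mathcal{W}=\sum_{j=1}^n w_j$, and let $U$ be a matrix whose $d$ (or fewer) columns form an orthonormal basis of the column space of $D_wX$, with rows $U_i$. Then for every $i\in[n]$ the sensitivity satisfies $\varsigma_i\le s_i:=(20+2\mu)\left(\|U_i\|_2+w_i/\mathcal{W}\right)$, and the total sensitivity satisfies $\mathfrak{S}=\sum_{i=1}^n\varsigma_i\le S:=\sum_{i=1}^n s_i\le 44\mu\sqrt{nd}$.
   Context: $g(z)=\ln(1+e^z)$ and $f_w(X\beta)=\sum_{j=1}^n w_j g(x_j\beta)$. The sensitivity of the $i$-th point is $\varsigma_i=\sup_{\beta\in\mathbb{R}^d}\frac{w_i g(x_i\beta)}{f_w(X\beta)}$. $D_w$ is the diagonal matrix with $(D_w)_{ii}=w_i$. For a vector $v$, $v^+$ and $v^-$ denote the vectors of its positive and negative entries. $\mu_w(X)=\sup_{\beta:\,D_wX\beta\neq0}\|(D_wX\beta)^+\|_1/\|(D_wX\beta)^-\|_1$, and $X$ weighted by $w$ is $\mu$-complex if $\mu_w(X)\le\mu$ (note $\mu_w(X)\ge 1$ by symmetry $\beta\mapsto-\beta$). *)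

(* Defs.v *)
From Stdlib Require Import Reals Lra ClassicalEpsilon.
Open Scope R_scope.

Fixpoint sumR (n : nat) (f : nat -> R) : R :=
  match n with
  | O => 0
  | S m => sumR m f + f m
  end.

(* Least upper bound of a set of reals (chosen classically; meaningful when
   the set is nonempty and bounded above, as it is for sensitivities). *)
Definition lubR (E : R -> Prop) : R :=
  epsilon (inhabits 0) (fun m => is_lub E m).

Definition g (z : R) : R := ln (1 + exp z).

(* A matrix X in R^{n x d} is a function nat -> nat -> R, entry X i a for
   i < n, a < d; a vector beta in R^d is a function nat -> R (entries a < d). *)

Definition rowdot (d : nat) (X : nat -> nat -> R) (i : nat) (beta : nat -> R) : R :=
  sumR d (fun a => X i a * beta a).

Definition f_w (n d : nat) (w : nat -> R) (X : nat -> nat -> R) (beta : nat -> R) : R :=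
  sumR n (fun j => w j * g (rowdot d X j beta)).

Definition sensitivity (n d : nat) (w : nat -> R) (X : nat -> nat -> R) (i : nat) : R :=
  lubR (fun r => exists beta : nat -> R,
          r = w i * g (rowdot d X i beta) / f_w n d w X beta).

Definition posR (x : R) : R := Rmax x 0.
Definition negR (x : R) : R := Rmax (- x) 0.

(* X weighted by w is mu-complex: mu_w(X) <= mu, where
   mu_w(X) = sup_{beta : D_w X beta <> 0} ||(D_w X beta)^+||_1 / ||(D_w X beta)^-||_1.
   Unfolded: for every beta with D_w X beta <> 0, the ratio is <= mu
   (an infinite ratio, i.e. zero negative part, is excluded). *)
Definition mu_complex (n d : nat) (w : nat -> R) (X : nat -> nat -> R) (mu : R) : Prop :=
  forall beta : nat -> R,
    (exists i, (i < n)%nat /\ w i * rowdot d X i beta <> 0) ->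
    sumR n (fun i => negR (w i * rowdot d X i beta)) <> 0 /\
    sumR n (fun i => posR (w i * rowdot d X i beta))
      / sumR n (fun i => negR (w i * rowdot d X i beta)) <= mu.

Definition orthonormal_basis_colspace (n d k : nat) (w : nat -> R)
    (X U : nat -> nat -> R) : Prop :=
  (forall a b, (a < k)%nat -> (b < k)%nat ->
     sumR n (fun i => U i a * U i b) = if Nat.eq_dec a b then 1 else 0) /\
  (forall v : nat -> R,
     (exists c : nat -> R, forall i, (i < n)%nat -> v i = sumR k (fun a => U i a * c a))
     <->
     (exists beta : nat -> R, forall i, (i < n)%nat -> v i = w i * rowdot d X i beta)).

Definition row_norm2 (k : nat) (U : nat -> nat -> R) (i : nat) : R :=
  sqrt (sumR k (fun a => U i a ^ 2)).

(* Main.v *)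
Require Import Defs.
From Stdlib Require Import Reals.
From Stdlib Require Import Lra Psatz ClassicalEpsilon Classical.
Open Scope R_scope.

Lemma sumR_ext n f h : (forall i, (i < n)%nat -> f i = h i) -> sumR n f = sumR n h.
Proof. induction n; intros H; simpl; [reflexivity|]. rewrite IHn by (intros; apply H; lia). rewrite H by lia. reflexivity. Qed.

Lemma sumR_le n f h : (forall i, (i < n)%nat -> f i <= h i) -> sumR n f <= sumR n h.
Proof. induction n; intros H; simpl; [lra|]. assert (sumR n f <= sumR n h) by (apply IHn; intros; apply H; lia). specialize (H n ltac:(lia)). lra. Qed.

Lemma sumR_zero n : sumR n (fun _ => 0) = 0.
Proof. induction n; simpl; [reflexivity| rewrite IHn; ring]. Qed.

Lemma sumR_plus n f h : sumR n (fun i => f i + h i) = sumR n f + sumR n h.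
Proof. induction n; simpl; [ring| rewrite IHn; ring]. Qed.

Lemma sumR_scal n c f : sumR n (fun i => c * f i) = c * sumR n f.
Proof. induction n; simpl; [ring| rewrite IHn; ring]. Qed.

Lemma sumR_nonneg n f : (forall i, (i<n)%nat -> 0 <= f i) -> 0 <= sumR n f.
Proof. intros H. rewrite <- (sumR_zero n). apply sumR_le. exact H. Qed.

Lemma sumR_swap n m (f : nat -> nat -> R) :
  sumR n (fun i => sumR m (fun a => f i a)) = sumR m (fun a => sumR n (fun i => f i a)).
Proof. induction n; simpl. - symmetry; apply sumR_zero. - rewrite IHn. rewrite sumR_plus. reflexivity. Qed.

Lemma sumR_delta m a h : (a < m)%nat ->
  sumR m (fun b => h b * (if Nat.eq_dec a b then 1 else 0)) = h a.
Proof.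
  induction m; intros Ha; [lia|]. simpl.
  destruct (Nat.eq_dec a m) as [->|Hne].
  - rewrite (sumR_ext m _ (fun _ => 0)). rewrite sumR_zero; ring.
    intros i Hi. destruct (Nat.eq_dec m i); [lia|ring].
  - rewrite IHm by lia. ring.
Qed.

Lemma sumR_one n : sumR n (fun _ => 1) = INR n.
Proof. induction n; simpl sumR; [simpl; ring|]. rewrite IHn, S_INR. ring. Qed.

Lemma CS n a b : (sumR n (fun i => a i * b i))^2 <=
  sumR n (fun i => a i ^2) * sumR n (fun i => b i ^2).
Proof.
  assert (E : forall t, sumR n (fun i => (a i * t + b i)^2) =
     t^2 * sumR n (fun i => a i ^2) + 2*t*sumR n (fun i => a i * b i) + sumR n (fun i => b i ^2)).
  { intros t. induction n; cbn [sumR]; [ring|]. rewrite IHn; ring. }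
  set (A := sumR n (fun i => a i ^2)) in *. set (B := sumR n (fun i => b i ^2)) in *.
  set (P := sumR n (fun i => a i * b i)) in *.
  assert (Hq : forall t, 0 <= t^2 * A + 2 * t * P + B).
  { intros t. specialize (E t). assert (0 <= sumR n (fun i => (a i * t + b i)^2)) by (apply sumR_nonneg; intros; apply pow2_ge_0). lra. }
  assert (HA : 0 <= A) by (apply sumR_nonneg; intros; apply pow2_ge_0).
  assert (HB : 0 <= B) by (apply sumR_nonneg; intros; apply pow2_ge_0).
  destruct (Req_dec A 0) as [HA0|HA0].
  - destruct (Req_dec P 0) as [HP|HP].
    + rewrite HP, HA0. lra.
    + exfalso. specialize (Hq (-(B+1)/(2*P))). rewrite HA0 in Hq.
      replace ((- (B + 1) / (2 * P)) ^ 2 * 0 + 2 * (- (B + 1) / (2 * P)) * P + B) with (-1) in Hq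
        by (field; exact HP). lra.
  - specialize (Hq (-P/A)).
    replace ((- P / A) ^ 2 * A + 2 * (- P / A) * P + B) with ((A*B - P^2)/A) in Hq by (field; exact HA0).
    assert (HA' : 0 < A) by lra.
    assert (0 <= A * ((A*B - P^2)/A)) by (apply Rmult_le_pos; lra).
    replace (A * ((A*B - P^2)/A)) with (A*B - P^2) in H by (field; exact HA0). lra.
Qed.

Lemma sq_le_abs_sq n y : sumR n (fun i => y i ^2) <= (sumR n (fun i => Rabs (y i)))^2.
Proof.
  induction n; cbn [sumR]; [simpl; lra|].
  assert (0 <= sumR n (fun i => Rabs (y i))) by (apply sumR_nonneg; intros; apply Rabs_pos).
  pose proof (Rabs_pos (y n)). rewrite <- (pow2_abs (y n)). nra.
Qed.

Lemma ln_le' x y : 0 < x -> x <= y -> ln x <= ln y.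
Proof. intros. destruct (Req_dec x y); [subst; lra|]. left; apply ln_increasing; lra. Qed.

Lemma exp_le' x y : x <= y -> exp x <= exp y.
Proof. intros. destruct (Req_dec x y); [subst; lra|]. left; apply exp_increasing; lra. Qed.

Lemma g_pos z : 0 < g z.
Proof. unfold g. rewrite <- ln_1. apply ln_increasing; [lra|]. pose proof (exp_pos z); lra. Qed.

Lemma g_upper z : g z <= 1 + posR z.
Proof.
  unfold g. rewrite <- (ln_exp (1 + posR z)). apply ln_le'.
  { pose proof (exp_pos z); lra. }
  rewrite exp_plus.
  assert (H1 : 2 <= exp 1) by (pose proof (exp_ineq1_le 1); lra).
  assert (Hz : z <= posR z) by (unfold posR; apply Rmax_l).
  assert (H0 : 0 <= posR z) by (unfold posR; apply Rmax_r).
  pose proof (exp_le' _ _ Hz). pose proof (exp_le' _ _ H0). rewrite exp_0 in H2.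
  pose proof (exp_pos z). nra.
Qed.

Lemma g_lower z : posR z <= g z.
Proof.
  unfold posR. apply Rmax_lub; [|left; apply g_pos].
  unfold g. rewrite <- (ln_exp z) at 1. left. apply ln_increasing; [apply exp_pos|lra].
Qed.

Lemma ln_lower u : 0 < u -> u / (1 + u) <= ln (1 + u).
Proof.
  intros Hu. pose proof (exp_ineq1_le (- ln (1+u))).
  rewrite exp_Ropp, exp_ln in H by lra.
  assert (/ (1+u) = 1 - u/(1+u)) by (field; lra). lra.
Qed.

Lemma g_quarter z : -1 <= z -> / 4 <= g z.
Proof.
  intros Hz. unfold g. pose proof (exp_pos z) as Hp.
  eapply Rle_trans; [|apply ln_lower; exact Hp].
  assert (Hz' : - (1) <= z) by lra. pose proof (exp_le' _ _ Hz'). rewrite exp_Ropp in H. pose proof exp_le_3.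
  pose proof (exp_pos 1).
  assert (/3 <= / exp 1) by (apply Rinv_le_contravar; lra).
  apply (Rmult_le_reg_r (4*(1+exp z))); [lra|].
  replace (exp z / (1 + exp z) * (4 * (1 + exp z))) with (4 * exp z) by (field; lra). lra.
Qed.

Lemma sumR_scal_r n c f : sumR n (fun i => f i * c) = sumR n f * c.
Proof. induction n; simpl; [ring| rewrite IHn; ring]. Qed.

Lemma sq_sum k f : (sumR k f)^2 = sumR k (fun a => sumR k (fun b => f a * f b)).
Proof.
  rewrite (sumR_ext k (fun a => sumR k (fun b => f a * f b)) (fun a => f a * sumR k f)).
  - rewrite sumR_scal_r. ring.
  - intros a _. rewrite <- sumR_scal. reflexivity.
Qed.

Lemma rowdot_opp d X j beta : rowdot d X j (fun a => - beta a) = - rowdot d X j beta.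
Proof.
  unfold rowdot. rewrite (sumR_ext d _ (fun a => -1 * (X j a * beta a))).
  - rewrite sumR_scal. ring.
  - intros; ring.
Qed.

Lemma abs_split x : Rabs x = posR x + negR x.
Proof. unfold posR, negR, Rmax. repeat destruct Rle_dec; unfold Rabs; destruct Rcase_abs; lra. Qed.

Lemma Ubound (n d k : nat) (X : nat -> nat -> R) (w : nat -> R) (U : nat -> nat -> R)
  (hU : orthonormal_basis_colspace n d k w X U) beta i (hi : (i < n)%nat) :
  Rabs (w i * rowdot d X i beta) <=
    row_norm2 k U i * sumR n (fun j => Rabs (w j * rowdot d X j beta)).
Proof.
  set (y := fun j => w j * rowdot d X j beta).
  change (Rabs (y i) <= row_norm2 k U i * sumR n (fun j => Rabs (y j))).
  destruct hU as [Horth Hspan].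
  assert (Hex : exists beta0 : nat -> R, forall j, (j < n)%nat -> y j = w j * rowdot d X j beta0) by (exists beta; intros; reflexivity).
  destruct (proj2 (Hspan y) Hex) as [c Hc].
  assert (HCS : (y i)^2 <= sumR k (fun a => U i a ^2) * sumR k (fun a => c a ^2)).
  { rewrite (Hc i hi). apply CS. }
  assert (Hc2 : sumR k (fun a => c a ^2) = sumR n (fun j => y j ^2)).
  { rewrite (sumR_ext n _ (fun j => sumR k (fun a => sumR k (fun b => (U j a * U j b) * (c a * c b))))).
    2:{ intros j hj. rewrite (Hc j hj), sq_sum. apply sumR_ext; intros a _. apply sumR_ext; intros b _. ring. }
    rewrite sumR_swap.
    apply sumR_ext; intros a ha.
    rewrite sumR_swap.
    rewrite (sumR_ext k _ (fun b => (c a * c b) * (if Nat.eq_dec a b then 1 else 0))).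
    - rewrite sumR_delta by exact ha. ring.
    - intros b hb. rewrite sumR_scal_r. rewrite Horth by assumption. ring. }
  assert (HY : sumR n (fun j => y j ^2) <= (sumR n (fun j => Rabs (y j)))^2) by apply sq_le_abs_sq.
  set (Y := sumR n (fun j => Rabs (y j))) in *.
  assert (HY0 : 0 <= Y) by (apply sumR_nonneg; intros; apply Rabs_pos).
  assert (HA0 : 0 <= sumR k (fun a => U i a ^2)) by (apply sumR_nonneg; intros; apply pow2_ge_0).
  assert (HA : row_norm2 k U i * row_norm2 k U i = sumR k (fun a => U i a ^2)) by (unfold row_norm2; apply sqrt_sqrt; exact HA0).
  assert (HA1 : 0 <= row_norm2 k U i) by (unfold row_norm2; apply sqrt_pos).
  set (A := row_norm2 k U i) in *.
  assert (Habs : Rabs (y i) ^2 <= (A * Y)^2).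
  { rewrite pow2_abs. rewrite Hc2 in HCS. rewrite <- HA in HCS.
    assert (A*A * sumR n (fun j => y j ^2) <= A*A*Y^2) by (apply Rmult_le_compat_l; nra). nra. }
  pose proof (Rabs_pos (y i)). assert (0 <= A*Y) by (apply Rmult_le_pos; lra).
  simpl in Habs. destruct (Rle_lt_dec (Rabs (y i)) (A*Y)); [lra|]. exfalso.
  assert ((A*Y)*(A*Y) < Rabs (y i) * Rabs (y i)) by (apply Rmult_le_0_lt_compat; lra). lra.
Qed.

Lemma f_pos n d w X beta : (0 < n)%nat -> (forall j, (j < n)%nat -> 0 < w j) -> 0 < f_w n d w X beta.
Proof.
  intros hn hw. unfold f_w. destruct n; [lia|]. cbn [sumR].
  assert (0 <= sumR n (fun j => w j * g (rowdot d X j beta))).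
  { apply sumR_nonneg. intros. pose proof (g_pos (rowdot d X i beta)). pose proof (hw i ltac:(lia)). nra. }
  pose proof (g_pos (rowdot d X n beta)). pose proof (hw n ltac:(lia)). nra.
Qed.

Lemma key (n d k : nat) (X : nat -> nat -> R) (w : nat -> R) (mu : R)
  (U : nat -> nat -> R)
  (hn : (0 < n)%nat) (hmu1 : 1 <= mu)
  (hw : forall j, (j < n)%nat -> 0 < w j)
  (hmu : mu_complex n d w X mu)
  (hU : orthonormal_basis_colspace n d k w X U) beta i (hi : (i < n)%nat) :
  w i * g (rowdot d X i beta) <=
   (20 + 2 * mu) * (row_norm2 k U i + w i / sumR n w) * f_w n d w X beta.
Proof.
  pose proof (Ubound n d k X w U hU beta i hi) as HU.
  set (z := fun j => rowdot d X j beta).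
  set (f := f_w n d w X beta).
  assert (Hf : 0 < f) by (apply f_pos; assumption).
  set (Y := sumR n (fun j => Rabs (w j * rowdot d X j beta))) in *.
  set (P := sumR n (fun j => posR (w j * rowdot d X j beta))).
  set (N := sumR n (fun j => negR (w j * rowdot d X j beta))).
  assert (HPf : P <= f).
  { unfold P, f, f_w. apply sumR_le. intros j hj. unfold posR. apply Rmax_lub.
    - apply Rmult_le_compat_l; [left; apply hw; exact hj|].
      pose proof (g_lower (rowdot d X j beta)). pose proof (Rmax_l (rowdot d X j beta) 0).
      unfold posR in *. lra.
    - pose proof (g_pos (rowdot d X j beta)). pose proof (hw j hj). nra. }
  assert (HYPN : Y = P + N).
  { unfold Y, P, N. rewrite <- sumR_plus. apply sumR_ext. intros. apply abs_split. }
  assert (HP0 : 0 <= P) by (apply sumR_nonneg; intros; unfold posR; apply Rmax_r).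
  assert (HN : N <= mu * P).
  { destruct (classic (exists j, (j < n)%nat /\ w j * rowdot d X j beta <> 0)) as [Hex|Hnex].
    - destruct (hmu (fun a => - beta a)) as [H1 H2].
      { destruct Hex as [j [hj Hj]]. exists j. split; [exact hj|]. rewrite rowdot_opp. intro; apply Hj; lra. }
      assert (E1 : sumR n (fun i0 => negR (w i0 * rowdot d X i0 (fun a => - beta a))) = P).
      { unfold P. apply sumR_ext. intros. rewrite rowdot_opp. unfold negR, posR. f_equal. ring. }
      assert (E2 : sumR n (fun i0 => posR (w i0 * rowdot d X i0 (fun a => - beta a))) = N).
      { unfold N. apply sumR_ext. intros. rewrite rowdot_opp. unfold negR, posR. f_equal. ring. }
      rewrite E1, E2 in *. assert (0 < P) by lra.
      apply (Rmult_le_compat_r P) in H2; [|lra].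
      replace (N / P * P) with N in H2 by (field; lra). lra.
    - assert (HN0 : N = 0).
      { unfold N. rewrite <- (sumR_zero n). apply sumR_ext. intros j hj.
        destruct (Req_dec (w j * rowdot d X j beta) 0) as [E|E].
        + rewrite E. unfold negR. rewrite Ropp_0. apply Rmax_left. lra.
        + exfalso. apply Hnex. exists j. auto. }
      nra. }
  assert (HYf : Y <= (1 + mu) * f) by nra.
  assert (HWf : sumR n w <= 4 * f + Y).
  { unfold f, f_w, Y. rewrite <- sumR_scal, <- sumR_plus. apply sumR_le. intros j hj.
    pose proof (hw j hj). rewrite Rabs_mult, (Rabs_pos_eq (w j)) by lra.
    destruct (Rle_lt_dec (-1) (rowdot d X j beta)) as [Hz|Hz].
    - pose proof (g_quarter _ Hz). pose proof (Rabs_pos (rowdot d X j beta)). nra.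
    - assert (1 < Rabs (rowdot d X j beta)) by (rewrite Rabs_left by lra; lra).
      pose proof (g_pos (rowdot d X j beta)). nra. }
  assert (HW : 0 < sumR n w).
  { rewrite <- (sumR_zero n). destruct n; [lia|]. cbn [sumR].
    assert (sumR n (fun _ => 0) <= sumR n w) by (apply sumR_le; intros; left; apply hw; lia).
    pose proof (hw n ltac:(lia)). lra. }
  assert (Hlhs : w i * g (rowdot d X i beta) <= w i + Rabs (w i * rowdot d X i beta)).
  { pose proof (g_upper (rowdot d X i beta)). pose proof (hw i hi).
    assert (posR (rowdot d X i beta) <= Rabs (rowdot d X i beta)).
    { unfold posR. apply Rmax_lub; [apply Rle_abs|apply Rabs_pos]. }
    rewrite Rabs_mult, (Rabs_pos_eq (w i)) by lra. nra. }
  set (A := row_norm2 k U i) in *.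
  assert (HA : 0 <= A) by (unfold A, row_norm2; apply sqrt_pos).
  set (W := sumR n w) in *.
  pose proof (hw i hi).
  assert (T1 : A * Y <= (20 + 2*mu) * A * f) by nra.
  assert (T2 : w i <= (20 + 2*mu) * (w i / W) * f).
  { assert (w i = (w i / W) * W) by (field; lra).
    assert (0 <= w i / W) by (unfold Rdiv; apply Rmult_le_pos; [lra|left; apply Rinv_0_lt_compat; lra]).
    assert (W <= (20 + 2*mu) * f) by nra. nra. }
  nra.
Qed.

Theorem lemma9 (n d k : nat) (X : nat -> nat -> R) (w : nat -> R) (mu : R)
  (U : nat -> nat -> R)
  (hn : (0 < n)%nat) (hd : (0 < d)%nat) (hmu1 : 1 <= mu)
  (hw : forall j, (j < n)%nat -> 0 < w j)
  (hmu : mu_complex n d w X mu)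
  (hk : (k <= d)%nat)
  (hU : orthonormal_basis_colspace n d k w X U) :
  let W := sumR n w in
  let s := fun i => (20 + 2 * mu) * (row_norm2 k U i + w i / W) in
  (forall i, (i < n)%nat -> sensitivity n d w X i <= s i) /\
  sumR n (fun i => sensitivity n d w X i) <= sumR n s /\
  sumR n s <= 44 * mu * sqrt (INR n * INR d).
Proof.
  intros W s.
  assert (Hsens : forall i, (i < n)%nat -> sensitivity n d w X i <= s i).
  { intros i hi. unfold sensitivity, lubR.
    set (E := fun r => exists beta : nat -> R, r = w i * g (rowdot d X i beta) / f_w n d w X beta).
    assert (Hub : is_upper_bound E (s i)).
    { intros r [beta ->]. pose proof (key n d k X w mu U hn hmu1 hw hmu hU beta i hi).
      pose proof (f_pos n d w X beta hn hw).
      apply (Rmult_le_reg_r (f_w n d w X beta)); [lra|].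
      unfold Rdiv. rewrite Rmult_assoc, Rinv_l by lra. unfold s, W. lra. }
    assert (Hex : exists m, is_lub E m).
    { destruct (completeness E) as [m Hm].
      - exists (s i). exact Hub.
      - exists (w i * g (rowdot d X i (fun _ => 0)) / f_w n d w X (fun _ => 0)). exists (fun _ => 0). reflexivity.
      - exists m; exact Hm. }
    pose proof (epsilon_spec (inhabits 0) (fun m => is_lub E m) Hex) as [_ H2].
    apply H2. exact Hub. }
  split; [exact Hsens|]. split.
  { apply sumR_le. exact Hsens. }
  assert (HW : 0 < W).
  { unfold W. rewrite <- (sumR_zero n). destruct n; [lia|]. cbn [sumR].
    assert (sumR n (fun _ => 0) <= sumR n w) by (apply sumR_le; intros; left; apply hw; lia).
    pose proof (hw n ltac:(lia)). lra. }
  set (SA := sumR n (fun i => row_norm2 k U i)).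
  assert (Hs : sumR n s = (20 + 2*mu) * (SA + 1)).
  { unfold s, SA. rewrite sumR_scal, sumR_plus.
    rewrite (sumR_ext n (fun i => w i / W) (fun i => w i * / W)) by (intros; reflexivity).
    rewrite sumR_scal_r. fold W. rewrite Rinv_r by lra. reflexivity. }
  assert (HSA0 : 0 <= SA) by (apply sumR_nonneg; intros; unfold row_norm2; apply sqrt_pos).
  assert (Hsq : sumR n (fun i => row_norm2 k U i ^2) = INR k).
  { rewrite (sumR_ext n _ (fun i => sumR k (fun a => U i a * U i a))).
    2:{ intros i _. unfold row_norm2. rewrite <- Rsqr_pow2, Rsqr_sqrt.
        - apply sumR_ext; intros; ring.
        - apply sumR_nonneg; intros; apply pow2_ge_0. }
    rewrite sumR_swap. rewrite <- sumR_one. apply sumR_ext. intros a ha.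
    rewrite (proj1 hU a a ha ha). destruct (Nat.eq_dec a a); [reflexivity|lia]. }
  assert (HCS := CS n (fun _ => 1) (fun i => row_norm2 k U i)). cbv beta in HCS.
  rewrite (sumR_ext n (fun i => 1 * row_norm2 k U i) (fun i => row_norm2 k U i)) in HCS by (intros; ring).
  rewrite (sumR_ext n (fun _ => 1 ^ 2) (fun _ => 1)) in HCS by (intros; ring).
  rewrite sumR_one, Hsq in HCS. fold SA in HCS.
  assert (HSAk : SA <= sqrt (INR n * INR d)).
  { rewrite <- (sqrt_pow2 SA) by exact HSA0. apply sqrt_le_1_alt.
    assert (INR k <= INR d) by (apply le_INR; exact hk).
    assert (0 <= INR n) by apply pos_INR. nra. }
  assert (H1 : 1 <= sqrt (INR n * INR d)).
  { rewrite <- sqrt_1. apply sqrt_le_1_alt.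
    assert (1 <= INR n) by (apply (le_INR 1); lia).
    assert (1 <= INR d) by (apply (le_INR 1); lia). nra. }
  rewrite Hs. nra.
Qed.
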